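(* Let $K$ be an imaginary quadratic field, $O$ an order in $K$, $\mathfrak{m}\subseteq O$ a proper ideal, $\Lambda\subseteq\mathbb{Z}$ multiplicatively closed, $H=P_{O,\Lambda}(\mathfrak{m})$, and $\pi:\mathrm{cl}_H\to\mathrm{cl}_O$ the natural surjection. Let $\Gamma$ be a subgroup of $\mathrm{GL}(O/\mathfrak{m})$ with $\Gamma\supseteq\Gamma_{O,\Lambda}(\mathfrak{m})$. Then $\ker\pi$ acts on the set $$X_\Gamma:=\{M\Gamma: M\in\mathrm{GL}(O/\mathfrak{m})\}/\sim,$$ where $\sim$ identifies left cosets up to left multiplication by $\mu_u$ for $u\in O^\times$; namely, identifying $\ker\pi$ with classes of $[\alpha]\in(O/\mathfrak{m})^\times$ modulo multiplication by the images of $\Lambda$ and $O^\times$ (via $[\alpha]\mapsto[\alpha O]$), the rule $M\Gamma\mapsto\mu_\alpha M\Gamma$ is a well-defined action.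
   Context: $\mathrm{GL}(O/\mathfrak{m})$ is the group of group automorphisms of $O/\mathfrak{m}$, and $\mu_\alpha$ denotes multiplication by $\alpha$ on $O/\mathfrak{m}$. Proper ideal: $\{\alpha\in K:\alpha\mathfrak{m}\subseteq\mathfrak{m}\}=O$. $\mathrm{cl}_O$ is the class group of proper fractional ideals modulo principal ones. $I_O(\mathfrak{m})$ is generated by proper integral ideals coprime to $\mathfrak{m}$, $\mathrm{cl}_H=I_O(\mathfrak{m})/H$, and $\pi$ sends the class of $\mathfrak{a}$ to its class in $\mathrm{cl}_O$. For $\alpha,\beta\in K^\times$, $\alpha\equiv\beta\bmod\mathfrak{m}$ means $\alpha_1\beta_2-\alpha_2\beta_1\in\mathfrak{m}$ whenever $\alpha=\alpha_1/\alpha_2,\beta=\beta_1/\beta_2$ with $\alpha_i,\beta_i\in O$. $P_{O,\Lambda}(\mathfrak{m})=\{\alpha O:\alpha\equiv\lambda\bmod\mathfrak{m}$ for some $\lambda\in\Lambda$ coprime to $N(\mathfrak{m})\}$ and $\Gamma_{O,\Lambda}(\mathfrak{m})=\{\mu_\alpha:\alpha O\in P_{O,\Lambda}(\mathfrak{m})\}$. By an exact sequence $1\to O^\times/(O^\times\cap(\Lambda+\mathfrak{m}))\to(O/\mathfrak{m})^\times/\Delta\to\mathrm{cl}_H\to\mathrm{cl}_O\to1$ (with $\Delta$ the image of $\Lambda$ in $(O/\mathfrak{m})^\times$), $\ker\pi$ is the image of $(O/\mathfrak{m})^\times$ under $[\alpha]\mapsto[\alpha O]$. *)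

(* Defs.v *)
(* Setoid-style formalization: the imaginary quadratic field,
   the order O, the ideal m, the quotient O/m and the group GL(O/m) are all
   represented inside algC, with quotients handled by explicit congruences. *)
From HB Require Import structures.
From mathcomp Require Import all_boot all_order all_algebra all_field.
Set Implicit Arguments. Unset Strict Implicit. Unset Printing Implicit Defensive.
Import Order.TTheory GRing.Theory Num.Theory.
Local Open Scope ring_scope.

Definition quadK (d : nat) (x : algC) : Prop :=
  exists a b : rat, x = ratr a + ratr b * sqrtC (- (d%:R)).

Definition is_quad_order (d : nat) (O : algC -> Prop) : Prop :=
  [/\ (forall x, O x -> quadK d x),
      O 1,
      (forall x y, O x -> O y -> O (x - y)),
      (forall x y, O x -> O y -> O (x * y)) &
      exists a b : algC,
        (forall x, O x <-> exists i j : int, x = i%:~R * a + j%:~R * b) /\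
        (forall x, quadK d x -> exists p q : rat, x = ratr p * a + ratr q * b)].

Definition is_ideal_of (O m : algC -> Prop) : Prop :=
  [/\ (forall x, m x -> O x), m 0,
      (forall x y, m x -> m y -> m (x - y)) &
      (forall r x, O r -> m x -> m (r * x))].

(* proper ideal: {alpha in K : alpha m ⊆ m} = O *)
Definition invertible_ideal (d : nat) (O m : algC -> Prop) : Prop :=
  is_ideal_of O m /\
  forall a, quadK d a -> ((forall x, m x -> m (a * x)) <-> O a).

Definition unitO (O : algC -> Prop) (u : algC) : Prop :=
  [/\ O u, u != 0 & O u^-1].

Definition unit_mod (O m : algC -> Prop) (a : algC) : Prop :=
  O a /\ exists2 b, O b & m (a * b - 1).

Definition norm_is (O m : algC -> Prop) (n : nat) : Prop :=
  exists s : seq algC,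
  [/\ size s = n,
      (forall i, (i < n)%N -> O (nth 0 s i)),
      (forall i j, (i < n)%N -> (j < n)%N -> m (nth 0 s i - nth 0 s j) -> i = j) &
      (forall x, O x -> exists2 i, (i < n)%N & m (x - nth 0 s i))].

Definition coprime_norm (O m : algC -> Prop) (l : int) : Prop :=
  exists n, norm_is O m n /\ coprimez l n%:Z.

Definition congK (O m : algC -> Prop) (a b : algC) : Prop :=
  forall a1 a2 b1 b2, O a1 -> O a2 -> O b1 -> O b2 -> a2 != 0 -> b2 != 0 ->
    a = a1 / a2 -> b = b1 / b2 -> m (a1 * b2 - a2 * b1).

(* the principal ideal alpha O lies in P_{O,Lambda}(m) *)
Definition in_P (d : nat) (O m : algC -> Prop) (Lam : int -> Prop) (a : algC) : Prop :=
  exists b, [/\ quadK d b, b != 0,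
    (forall x, (exists2 o, O o & x = a * o) <-> (exists2 o, O o & x = b * o)) &
    exists l, [/\ Lam l, coprime_norm O m l & congK O m b l%:~R]].

(* GL(O/m): a function f represents the group automorphism [x] |-> [f x] of
   the additive group O/m (well defined, additive, bijective modulo m). *)
Definition GLm (O m : algC -> Prop) (f : algC -> algC) : Prop :=
  [/\ (forall x, O x -> O (f x)),
      (forall x y, O x -> O y -> m (x - y) -> m (f x - f y)),
      (forall x y, O x -> O y -> m (f (x + y) - (f x + f y))),
      (forall x y, O x -> O y -> m (f x - f y) -> m (x - y)) &
      (forall y, O y -> exists2 x, O x & m (f x - y))].

Definition gl_eq (O m : algC -> Prop) (f g : algC -> algC) : Prop :=
  forall x, O x -> m (f x - g x).

Definition GL_subgroup (O m : algC -> Prop) (Gam : (algC -> algC) -> Prop) : Prop :=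
  [/\ (forall f, Gam f -> GLm O m f),
      (forall f g, Gam f -> GLm O m g -> gl_eq O m f g -> Gam g),
      Gam (fun x => x),
      (forall f g, Gam f -> Gam g -> Gam (f \o g)) &
      (forall f g, Gam f -> GLm O m g -> gl_eq O m (f \o g) (fun x => x) -> Gam g)].

Definition mu (a : algC) : algC -> algC := fun x => a * x.

(* f represents mu_alpha, multiplication by alpha = a1/a2 in K on O/m
   (a1, a2 in O, a2 invertible mod m) *)
Definition is_mu (O m : algC -> Prop) (a : algC) (f : algC -> algC) : Prop :=
  exists a1 a2, [/\ O a1, O a2, a2 != 0, a = a1 / a2 &
     unit_mod O m a2 /\ forall x, O x -> m (a2 * f x - a1 * x)].

Definition GammaOL (d : nat) (O m : algC -> Prop) (Lam : int -> Prop)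
    (f : algC -> algC) : Prop :=
  GLm O m f /\
  exists a, [/\ quadK d a, a != 0, in_P d O m Lam a & is_mu O m a f].

(* ker pi identified with (O/m)^x modulo the images of Lambda (elements
   coprime to N(m)) and of O^x: equality of classes of a and b *)
Definition kerpi_rel (O m : algC -> Prop) (Lam : int -> Prop) (a b : algC) : Prop :=
  exists l u, [/\ Lam l, coprime_norm O m l, unitO O u & m (a - l%:~R * u * b)].

(* X_Gamma: M Gamma ~ N Gamma iff N Gamma = mu_u M Gamma for some u in O^x *)
Definition X_rel (O m : algC -> Prop) (Gam : (algC -> algC) -> Prop)
    (M N : algC -> algC) : Prop :=
  exists u g, [/\ unitO O u, Gam g & gl_eq O m N (mu u \o M \o g)].

(* Main.v *)
Require Import Defs.
From HB Require Import structures.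
From mathcomp Require Import all_boot all_order all_algebra all_field.
From mathcomp Require Import ring.
From Stdlib Require Import ClassicalEpsilon.
Import Order.TTheory GRing.Theory Num.Theory.
Set Implicit Arguments. Unset Strict Implicit.
Local Open Scope ring_scope.

Definition ringO (O : algC -> Prop) :=
  [/\ O 1, (forall x y, O x -> O y -> O (x - y)) &
      (forall x y, O x -> O y -> O (x * y))].

Lemma ringO_of d O : is_quad_order d O -> ringO O.
Proof. by case=> _ ? ? ? _; split. Qed.

Section Basics.
Variables (O m : algC -> Prop) (HO : ringO O) (Hm : is_ideal_of O m).

Lemma O1 : O 1. Proof. by case: HO. Qed.
Lemma OB x y : O x -> O y -> O (x - y). Proof. by case: HO => _ h _; apply: h. Qed.
Lemma OM x y : O x -> O y -> O (x * y). Proof. by case: HO => _ _ h; apply: h. Qed.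
Lemma O0 : O 0. Proof. by rewrite -(subrr 1); apply: OB; apply: O1. Qed.
Lemma ON x : O x -> O (- x). Proof. by move=> h; rewrite -sub0r; apply: OB => //; apply: O0. Qed.
Lemma OD x y : O x -> O y -> O (x + y).
Proof. by move=> hx hy; rewrite -(opprK y); apply: OB => //; apply: ON. Qed.
Lemma Onat n : O n%:R.
Proof. elim: n => [|n IH]; first exact: O0. by rewrite mulrS; apply: OD => //; apply: O1. Qed.
Lemma Oint (z : int) : O z%:~R.
Proof. case: z => n; first exact: Onat.
by rewrite NegzE mulrNz; apply: ON; exact: Onat. Qed.

Lemma m0 : m 0. Proof. by case: Hm. Qed.
Lemma mO x : m x -> O x. Proof. by case: Hm => h _ _ _; apply: h. Qed.
Lemma mB x y : m x -> m y -> m (x - y). Proof. by case: Hm => _ _ h _; apply: h. Qed.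
Lemma mN x : m x -> m (- x). Proof. by move=> h; rewrite -sub0r; apply: mB => //; apply: m0. Qed.
Lemma mD x y : m x -> m y -> m (x + y).
Proof. by move=> hx hy; rewrite -(opprK y); apply: mB => //; apply: mN. Qed.
Lemma mMl r x : O r -> m x -> m (r * x). Proof. by case: Hm => _ _ _ h; apply: h. Qed.
Lemma mMr r x : O r -> m x -> m (x * r). Proof. by rewrite mulrC; apply: mMl. Qed.
Lemma meq x y : m x -> x = y -> m y. Proof. by move=> h <-. Qed.
Lemma mtr x y z : m (x - y) -> m (y - z) -> m (x - z).
Proof. move=> h1 h2; apply: (meq (mD h1 h2)); ring. Qed.
Lemma msym x y : m (x - y) -> m (y - x).
Proof. move=> h; apply: (meq (mN h)); ring. Qed.
Lemma mcongM r x y : O r -> m (x - y) -> m (r * x - r * y).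
Proof. move=> hr h; apply: (meq (mMl hr h)); ring. Qed.
End Basics.

Lemma norm_in_m O m n : ringO O -> is_ideal_of O m -> norm_is O m n -> m n%:R.
Proof.
move=> HO Hm [s [_ sO sinj scov]].
have ex : forall i : 'I_n, exists j : 'I_n, m (nth 0 s i + 1 - nth 0 s j).
  move=> i; have [j jn hj] := scov (nth 0 s i + 1) (OD HO (sO _ (ltn_ord i)) (O1 HO)).
  by exists (Ordinal jn).
pose sig i := proj1_sig (constructive_indefinite_description _ (ex i)).
have sigP (i : 'I_n) : m (nth 0 s i + 1 - nth 0 s (sig i)).
  exact: (proj2_sig (constructive_indefinite_description _ (ex i))).
have sig_inj : injective sig.
  move=> i j e; apply: val_inj; apply: sinj; [exact: ltn_ord|exact: ltn_ord|].
  have h := mB Hm (sigP i) (sigP j); rewrite e in h.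
  apply: (meq h); ring.
have hs : m (\sum_(i < n) (nth 0 s i + 1 - nth 0 s (sig i))).
  by apply: (big_ind m (m0 Hm) (mD Hm)) => i _; apply: sigP.
apply: (meq hs).
rewrite sumrB big_split /=.
have -> : \sum_(i < n) nth 0 s (sig i) = \sum_(i < n) nth 0 s i.
  by rewrite [RHS](reindex_inj sig_inj).
rewrite sumr_const card_ord.
ring.
Qed.

Lemma coprime_inv O m l : ringO O -> is_ideal_of O m -> coprime_norm O m l ->
  exists l' : int, m ((l * l')%:~R - 1).
Proof.
move=> HO Hm [n [hn cop]].
have [u [v e]] := Bezoutz l n%:Z.
move: cop; rewrite /coprimez => /eqP cop; rewrite cop in e.
exists u.
have hn' := norm_in_m HO Hm hn.
have h : m ((- v)%:~R * n%:R) := mMl Hm (Oint HO _) hn'.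
apply: (meq h).
have e' : (u * l + v * n%:Z)%:~R = (1 : algC) by rewrite e.
rewrite rmorphD !rmorphM /= in e'.
rewrite rmorphM /= rmorphN /=.
rewrite -[(n%:Z)%:~R]/(n%:R : algC) in e'.
transitivity (l%:~R * u%:~R - (u%:~R * l%:~R + v%:~R * (n%:R : algC))); first ring.
by rewrite e'.
Qed.

Lemma GL_M0 O m M : ringO O -> is_ideal_of O m -> GLm O m M -> m (M 0).
Proof.
move=> HO Hm [_ _ Hadd _ _].
have h := Hadd 0 0 (O0 HO) (O0 HO); rewrite addr0 in h.
have h2 := mN Hm h; apply: (meq h2); ring.
Qed.

Lemma GL_int O m M y (k : int) : ringO O -> is_ideal_of O m -> GLm O m M -> O y ->
  m (M (k%:~R * y) - k%:~R * M y).
Proof.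
move=> HO Hm HM Oy; have M0 := GL_M0 HO Hm HM.
case: (HM) => MO Mwd Hadd _ _.
have Hnat : forall n : nat, m (M (n%:R * y) - n%:R * M y).
  elim=> [|n IH]; first by rewrite !mul0r subr0.
  have h := Hadd y (n%:R * y) Oy (OM HO (Onat HO n) Oy).
  rewrite mulrS mulrDl mul1r.
  apply: (meq (mD Hm h IH)); rewrite mulrDl mul1r; ring.
case: k => n; first exact: Hnat.
rewrite NegzE mulrNz mulNr.
set z := n.+1%:R * y.
have Oz : O z := OM HO (Onat HO _) Oy.
have h := Hadd z (- z) Oz (ON HO Oz); rewrite subrr in h.
have h2 := mB Hm (mD Hm (mN Hm h) M0) (Hnat n.+1).
rewrite -/z in h2.
apply: (meq h2); rewrite /z. ring.
Qed.

Lemma GL_mulO O m a M : ringO O -> is_ideal_of O m -> unit_mod O m a -> GLm O m M ->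
  GLm O m (mu a \o M).
Proof.
move=> HO Hm [Oa [b Ob hab]] [MO Mwd Madd Minj Msurj]; rewrite /mu; split => /=.
- by move=> x Ox; exact: (OM HO Oa (MO x Ox)).
- by move=> x y Ox Oy h; exact: (mcongM Hm Oa (Mwd x y Ox Oy h)).
- move=> x y Ox Oy; apply: (meq (mMl Hm Oa (Madd x y Ox Oy))); ring.
- move=> x y Ox Oy h; apply: Minj => //.
  have Od : O (M x - M y) by exact: (OB HO (MO x Ox) (MO y Oy)).
  have h1 := mMl Hm Ob h.
  have h2 := mMl Hm Od hab.
  apply: (meq (mB Hm h1 h2)); ring.
- move=> y Oy; have [x Ox hx] := Msurj (b * y) (OM HO Ob Oy).
  exists x => //.
  have h1 := mMl Hm Oa hx.
  have h2 := mMl Hm Oy hab.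
  apply: (meq (mD Hm h1 h2)); ring.
Qed.

Lemma GL_id O m : ringO O -> is_ideal_of O m -> GLm O m (fun x => x).
Proof.
move=> HO Hm; split => //.
- by move=> x y _ _; rewrite subrr; apply: m0 Hm.
- by move=> y Oy; exists y => //; rewrite subrr; apply: m0 Hm.
Qed.

Lemma unitO1 O : ringO O -> unitO O 1.
Proof. by move=> HO; split; [exact: O1 | exact: oner_neq0 | rewrite invr1; exact: O1]. Qed.

Unset Implicit Arguments. Set Strict Implicit.

Theorem corollary3p1 (d : nat) (O m : algC -> Prop) (Lam : int -> Prop)
    (Gam : (algC -> algC) -> Prop) :
  (0 < d)%N -> is_quad_order d O -> invertible_ideal d O m ->
  Lam 1 -> (forall a b, Lam a -> Lam b -> Lam (a * b)) ->
  GL_subgroup O m Gam -> (forall f, GammaOL d O m Lam f -> Gam f) ->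
  [/\ (forall a M, unit_mod O m a -> GLm O m M -> GLm O m (mu a \o M)),
      (forall a b M N, unit_mod O m a -> unit_mod O m b -> kerpi_rel O m Lam a b ->
         GLm O m M -> GLm O m N -> X_rel O m Gam M N ->
         X_rel O m Gam (mu a \o M) (mu b \o N)),
      (forall M, GLm O m M -> X_rel O m Gam (mu 1 \o M) M) &
      (forall a b M, unit_mod O m a -> unit_mod O m b -> GLm O m M ->
         X_rel O m Gam (mu a \o (mu b \o M)) (mu (a * b) \o M))].
Proof.
move=> d0 HQ [Hm _] Lam1 LamM HG HGam.
have HO := ringO_of HQ.
case: HG => Gsub Gresp Gid Gcomp Ginv.
split.
- by move=> a M; apply: GL_mulO.
- move=> a b M N ua ub [l [u [Ll cl [Ou un0 Oui] hab]]] HM HN [u0 [g [[Ou0 u0n0 Ou0i] Gg hN]]].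
  have [l' hl'] := coprime_inv HO Hm cl.
  rewrite rmorphM /= in hl'.
  have Ob : O b by case: ub.
  case: (HM) => MO Mwd _ _ _.
  case: (HN) => NO _ _ _ _.
  have HGg := Gsub g Gg.
  case: (HGg) => gO _ _ _ _.
  have [l0|lnz] := eqVneq l 0.
    have m1 : m 1.
      rewrite l0 mul0r sub0r in hl'. apply: (meq (mN Hm hl')); ring.
    have mall : forall x, O x -> m x by move=> x Ox; apply: (meq (mMl Hm Ox m1)); ring.
    exists 1, (fun x => x); split => //; first exact: unitO1.
    move=> x Ox; apply: mall; rewrite /mu /=.
    apply: (OB HO (OM HO Ob (NO x Ox))).
    apply: (OM HO (O1 HO)).
    by apply: (OM HO); [case: ua | exact: MO].
  have Ol := Oint HO l; have Ol' := Oint HO l'.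
  have ul : unit_mod O m l%:~R by split => //; exists l'%:~R.
  have ul' : unit_mod O m l'%:~R by split => //; exists l%:~R => //; rewrite mulrC.
  have GLl : GLm O m (mu l%:~R) := GL_mulO (M := fun x => x) HO Hm ul (GL_id HO Hm).
  have GLl' : GLm O m (mu l'%:~R) := GL_mulO (M := fun x => x) HO Hm ul' (GL_id HO Hm).
  have Gl : Gam (mu l%:~R).
    apply: HGam; split => //; exists l%:~R.
    have qK : quadK d l%:~R by exists l%:~R, 0; rewrite rmorph0 mul0r addr0 rmorph_int.
    have l0' : (l%:~R : algC) != 0 by rewrite intr_eq0.
    split => //.
      exists l%:~R; split => //; exists l; split => //.
      move=> a1 a2 b1 b2 _ _ _ _ a2n b2n e1 e2.
      have -> : a1 = l%:~R * a2 by rewrite e1 mulfVK.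
      have -> : b1 = l%:~R * b2 by rewrite e2 mulfVK.
      apply: (meq (m0 Hm)); ring.
    exists l%:~R, 1; split => //; first exact: O1; first exact: oner_neq0; first by rewrite divr1.
    split; first by split; [exact: O1 | exists 1; [exact: O1 | rewrite mulr1 subrr; exact: m0 Hm]].
    by move=> x Ox; rewrite /mu mul1r subrr; exact: m0 Hm.
  have Gl' : Gam (mu l'%:~R).
    apply: (Ginv _ _ Gl GLl') => x Ox; rewrite /mu /=.
    apply: (meq (mMr Hm Ox hl')); ring.
  have Gg' : Gam (mu l'%:~R \o g) by apply: Gcomp.
  exists (u0 / u), (mu l'%:~R \o g); split => //.
    split; first exact: (OM HO Ou0 Oui).
      by rewrite mulf_neq0 // invr_eq0.
    by rewrite invfM invrK; exact: (OM HO Ou0i Ou).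
  move=> x Ox; rewrite /mu /=.
  have Ogx := gO x Ox.
  have Ogx' : O (l'%:~R * g x) := OM HO Ol' Ogx.
  have h1 : m (N x - u0 * M (g x)) by have := hN x Ox; rewrite /mu /=.
  have h2 : m (M (g x) - M (l%:~R * (l'%:~R * g x))).
    apply: Mwd => //; first exact: (OM HO Ol Ogx').
    apply: (meq (mN Hm (mMr Hm Ogx hl'))); ring.
  have h3 := GL_int l HO Hm HM Ogx'.
  have Obu0 : O (b * u0) := OM HO Ob Ou0.
  have OZ : O (u0 * u^-1 * M (l'%:~R * g x)) := OM HO (OM HO Ou0 Oui) (MO _ Ogx').
  apply: (meq (mD Hm (mD Hm (mD Hm (mMl Hm Ob h1) (mMl Hm Obu0 h2)) (mMl Hm Obu0 h3)) (mMl Hm OZ (mN Hm hab)))).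
  by field.
- move=> M HM; exists 1, (fun x => x); split => //; first exact: unitO1.
  by move=> x Ox; rewrite /mu /=; apply: (meq (m0 Hm)); ring.
- move=> a b M _ _ HM; exists 1, (fun x => x); split => //; first exact: unitO1.
  by move=> x Ox; rewrite /mu /=; apply: (meq (m0 Hm)); ring.
Qed.
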